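(* Let $\varphi\colon\mathcal{M}\to\mathcal{X}$ be a continuous surjective map from a Hausdorff, second-countable, locally compact topological space $\mathcal{M}$ to a metric space $(\mathcal{X},\mathrm{dist})$, let $y\in\mathcal{M}$ and $x=\varphi(y)$. The following are equivalent: (i) $\varphi$ is open at $y$; (ii) $\varphi$ is approximately open at $y$; (iii) $\varphi$ satisfies the Subsequence Lifting Property at $y$; (iv) $\varphi$ satisfies the Approximate Subsequence Lifting Property at $y$; (v) $\varphi$ satisfies ''local $\Rightarrow$ local'' at $y$.
   Context: (i) Open at $y$: $\varphi(U)$ is a neighborhood of $x$ in $\mathcal{X}$ for every neighborhood $U$ of $y$. (ii) Approximately open at $y$: the closure $\overline{\varphi(U)}$ is a neighborhood of $x$ for every neighborhood $U$ of $y$. (iii) SLP at $y$: for every sequence $(x_i)\subseteq\mathcal{X}$ converging to $x$ there exist a subsequence $(x_{i_j})$ and a sequence $(y_{i_j})\subseteq\mathcal{M}$ converging to $y$ with $\varphi(y_{i_j})=x_{i_j}$ for all $j$. (iv) ASLP at $y$: for every sequence $(x_i)\subseteq\mathcal{X}$ converging to $x$ and every sequence $(\epsilon_i)\subseteq\mathbb{R}_{>0}$ converging to $0$ there exist a subsequence indexed by $(i_j)$ and a sequence $(y_{i_j})\subseteq\mathcal{M}$ converging to $y$ with $\mathrm{dist}(\varphi(y_{i_j}),x_{i_j})\le\epsilon_{i_j}$ for all $j$. (v) ''local $\Rightarrow$ local'' at $y$: for every continuous $f\colon\mathcal{X}\to\mathbb{R}$, if $y$ is a local minimum of $f\circ\varphi$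 on $\mathcal{M}$ then $x$ is a local minimum of $f$ on $\mathcal{X}$. A neighborhood of a point is a set containing it in its interior. *)

(* Defs.v *)
From HB Require Import structures.
From mathcomp Require Import all_boot all_order all_algebra.
From mathcomp Require Import all_classical all_reals all_analysis.
Set Implicit Arguments. Unset Strict Implicit. Unset Printing Implicit Defensive.
Import Order.TTheory GRing.Theory Num.Theory numFieldTopology.Exports numFieldNormedType.Exports.
Local Open Scope classical_set_scope.
Local Open Scope ring_scope.

Definition locally_compact_space (T : topologicalType) : Prop :=
  forall p : T, exists2 K : set T, nbhs p K & compact K.

Section Props.
Variables (R : realType) (M : topologicalType) (X : metricType R) (phi : M -> X).

Definition open_at (y : M) : Prop :=
  forall U : set M, nbhs y U -> nbhs (phi y) (phi @` U).

Definition approx_open_at (y : M) : Prop :=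
  forall U : set M, nbhs y U -> nbhs (phi y) (closure (phi @` U)).

Definition SLP_at (y : M) : Prop :=
  forall xs : nat -> X, xs @ \oo --> phi y ->
  exists (idx : nat -> nat) (ys : nat -> M),
    [/\ (forall j, (idx j < idx j.+1)%N), ys @ \oo --> y &
        forall j, phi (ys j) = xs (idx j)].

Definition ASLP_at (y : M) : Prop :=
  forall (xs : nat -> X) (eps : nat -> R),
  xs @ \oo --> phi y -> (forall i, 0 < eps i) -> eps @ \oo --> (0 : R) ->
  exists (idx : nat -> nat) (ys : nat -> M),
    [/\ (forall j, (idx j < idx j.+1)%N), ys @ \oo --> y &
        forall j, mdist (phi (ys j)) (xs (idx j)) <= eps (idx j)].

Definition local_min_at (T : topologicalType) (g : T -> R) (p : T) : Prop :=
  \forall z \near p, g p <= g z.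

Definition local_local_at (y : M) : Prop :=
  forall f : X -> R, continuous f ->
  local_min_at (f \o phi) y -> local_min_at f (phi y).

End Props.

(* Main.v *)
Require Import Defs.
From HB Require Import structures.
From mathcomp Require Import all_boot all_order all_algebra.
From mathcomp Require Import all_classical all_reals all_analysis.
From mathcomp Require Import lra zify.
Set Implicit Arguments. Unset Strict Implicit. Unset Printing Implicit Defensive.
Import Order.TTheory GRing.Theory Num.Theory numFieldTopology.Exports numFieldNormedType.Exports.
Local Open Scope classical_set_scope.
Local Open Scope ring_scope.
Lemma l_open_approx (R : realType) (M : topologicalType) (X : metricType R)
  (phi : M -> X) (y : M) : open_at phi y -> approx_open_at phi y.
Proof. by move=> H U hU; apply: filterS (H U hU); exact: subset_closure. Qed.

Lemma l_approx_open (R : realType) (M : topologicalType) (X : metricType R)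
  (phi : M -> X) (hT2 : hausdorff_space M) (hlc : locally_compact_space M)
  (hcont : continuous phi) (y : M) : approx_open_at phi y -> open_at phi y.
Proof.
move=> H U hU.
have [C hC cC] := hlc y.
have reg := compact_regular hT2 cC hC.
have [V hV sV] := reg (U `&` C) (filterI hU hC).
have cK : compact (closure V).
  apply: (subclosed_compact _ cC); first exact: closed_closure.
  by move=> z /sV [].
have cphiK : compact (phi @` closure V).
  apply: continuous_compact => //; exact: continuous_subspaceT.
have clK : closed (phi @` closure V).
  by apply: compact_closed => //; exact: metric_hausdorff.
apply: filterS (H V hV).
have : closure (phi @` V) `<=` phi @` closure V.
  have -> : phi @` closure V = closure (phi @` closure V) by apply/closure_id.
  apply: closure_subset => _ [z zV <-]; exists z => //; exact: subset_closure.
move=> sub w /sub [z zK <-]; exists z => //.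
by have [] := sV z zK.
Qed.

Lemma l_SLP_ASLP (R : realType) (M : topologicalType) (X : metricType R)
  (phi : M -> X) (y : M) : SLP_at phi y -> ASLP_at phi y.
Proof.
move=> H xs eps hx heps _.
have [idx [ys [h1 h2 h3]]] := H xs hx.
exists idx, ys; split => // j.
by rewrite h3 mdistxx ltW.
Qed.

Lemma l_open_LL (R : realType) (M : topologicalType) (X : metricType R)
  (phi : M -> X) (y : M) : open_at phi y -> local_local_at phi y.
Proof.
move=> H f _ hmin.
apply: filterS (H _ hmin) => _ [z hz <-].
exact: hz.
Qed.
Lemma l_LL_approx (R : realType) (M : topologicalType) (X : metricType R)
  (phi : M -> X) (y : M) : local_local_at phi y -> approx_open_at phi y.
Proof.
move=> H U hU.
pose S := phi @` U.
have Sy : S (phi y) by exists y => //; exact: nbhs_singleton.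
pose d (w : X) : R := inf (mdist w @` S).
have ne w : nonempty (mdist w @` S) by exists (mdist w (phi y)); exists (phi y).
have lb w : has_lbound (mdist w @` S).
  by exists 0 => _ [p _ <-]; exact: mdist_ge0.
have d0 w : 0 <= d w by apply: lb_le_inf => // _ [p _ <-]; exact: mdist_ge0.
have dS p : S p -> d p = 0.
  move=> Sp; apply/eqP; rewrite eq_le d0 andbT.
  by rewrite -(mdistxx p); apply: ge_inf => //; exists p.
have lip w w' : d w <= d w' + mdist w w'.
  rewrite -lerBlDr; apply: lb_le_inf => // _ [p Sp <-].
  rewrite lerBlDr; apply: (le_trans (ge_inf (lb w) _)); first by exists p.
  by rewrite addrC metric_triangle.
pose f w := - d w.
have cf : continuous f.
  move=> w; apply/cvgrPdist_lt => e e0.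
  have hb := @nbhsx_ballx R X w e e0.
  apply: (filterS _ hb) => z; rewrite ballEmdist /= => hz.
  have h1 := lip w z; have h2 := lip z w.
  rewrite (metric_sym z w) in h2.
  rewrite /f ltr_distl; apply/andP; split; lra.
have hmin : local_min_at (f \o phi) y.
  apply: filterS hU => z Uz /=.
  by rewrite /f dS // dS //; exists z.
have := H f cf hmin.
apply: filterS => w; rewrite /f dS // lerN2 => dw.
have dw0 : d w = 0 by apply/eqP; rewrite eq_le dw d0.
move=> B /nbhs_ballP [r r0 sB].
have : inf (mdist w @` S) < r by rewrite -/(d w) dw0.
move=> /(inf_lt (ne w)) [_ [p Sp <-] hp].
exists p; split => //; apply: sB; rewrite ballEmdist; exact: hp.
Qed.
Lemma hcvg (R : realType) : (fun n : nat => (n.+1%:R : R)^-1) @ \oo --> (0 : R).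
Proof. exact: (@cvg_harmonic R). Qed.

Lemma hsmall (R : realType) (e : R) : 0 < e -> \forall n \near \oo, (n.+1%:R : R)^-1 < e.
Proof.
move=> e0; have /cvgrPdist_lt /(_ e e0) := @hcvg R.
by apply: filterS => n; rewrite sub0r normrN ger0_norm.
Qed.

Lemma l_ASLP_approx (R : realType) (M : topologicalType) (X : metricType R)
  (phi : M -> X) (y : M) : ASLP_at phi y -> approx_open_at phi y.
Proof.
move=> H U hU; apply: contrapT => nN.
pose S := phi @` U.
have hx n : exists x, mdist (phi y) x < n.+1%:R^-1 /\ ~ closure S x.
  apply: contrapT => hn; apply: nN; apply/nbhs_ballP.
  exists (n.+1%:R^-1); first by rewrite /= invr_gt0 ltr0n.
  move=> z; rewrite ballEmdist /= => hz.
  by apply: contrapT => nz; apply: hn; exists z.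
have [xs hxs] := choice hx.
have hr n : exists r : R, [/\ 0 < r, r <= n.+1%:R^-1 &
    forall p, S p -> ~ mdist (xs n) p < r].
  have [_ ncl] := hxs n.
  have [B hB SB] : exists2 B, nbhs (xs n) B & ~ (S `&` B !=set0).
    by apply: contrapT => h; apply: ncl => B hB; apply: contrapT => h2; apply: h; exists B.
  have [r r0 sB] := (nbhs_ballP _ _).1 hB.
  exists (Num.min r n.+1%:R^-1); split.
  - by rewrite lt_min r0 invr_gt0 ltr0n.
  - by rewrite ge_min lexx orbT.
  - move=> p Sp hp; apply: SB; exists p; split => //; apply: sB.
    rewrite ballEmdist /=; apply: (lt_le_trans hp); by rewrite ge_min lexx.
have [r hr'] := choice hr.
pose eps n := r n / 2.
have eps0 n : 0 < eps n by have [] := hr' n; move=> *; rewrite /eps divr_gt0.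
have cx : xs @ \oo --> phi y.
  apply/metricType_numDomainType.cvgrPdist_lt => e e0.
  apply: filterS (hsmall e0) => n hn.
  by have [+ _] := hxs n; move/lt_trans; apply.
have ceps : eps @ \oo --> (0 : R).
  apply/cvgrPdist_lt => e e0.
  apply: filterS (hsmall e0) => n hn.
  have [rn0 rnle _] := hr' n.
  rewrite sub0r normrN ger0_norm; last exact: ltW.
  rewrite /eps; apply: (lt_trans _ (le_lt_trans rnle hn)); lra.
have [idx [ys [hidx hys hd]]] := H xs eps cx eps0 ceps.
have [N _ hN] := hys U hU.
have UN : U (ys N) by apply: hN => /=.
have [rn0 _ hnot] := hr' (idx N).
apply: (hnot (phi (ys N))); first by exists (ys N).
rewrite metric_sym; apply: (le_lt_trans (hd N)).
rewrite /eps; lra.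
Qed.
Fixpoint Wseq (T : Type) (g : nat -> set T) (k : nat) : set T :=
  match k with 0 => setT | k'.+1 => Wseq g k' `&` g k' end.

Lemma Wseq_mono (T : Type) (g : nat -> set T) (j k : nat) :
  (j <= k)%N -> Wseq g k `<=` Wseq g j.
Proof.
elim: k => [|k IH]; first by rewrite leqn0 => /eqP ->.
rewrite leq_eqVlt => /orP [/eqP -> //|]; rewrite ltnS => /IH h z [wz _].
exact: h.
Qed.

Lemma countable_base (M : topologicalType) (hsc : @second_countable M) (y : M) :
  exists W : nat -> set M, [/\ forall k, nbhs y (W k),
    forall j k, (j <= k)%N -> W k `<=` W j &
    forall U, nbhs y U -> exists k, W k `<=` U].
Proof.
have [B cB [Bop Bb]] := hsc.
have [f finj] := countable_injP B cB.
pose g n := match pselect (exists b, [/\ B b, b y & f b = n]) with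
  | left h => projT1 (cid h) | right _ => setT end.
have gn n : nbhs y (g n).
  rewrite /g; case: pselect => [h|_]; last exact: filterT.
  case: (cid h) => b /= [Bb' by' _]; apply: open_nbhs_nbhs; split => //.
  exact: Bop.
have gb b : B b -> b y -> g (f b) `<=` b.
  move=> Bb' by'; rewrite /g; case: pselect => [h|nh]; last first.
    by exfalso; apply: nh; exists b.
  case: (cid h) => b' /= [Bb'' _ fb]; suff -> : b' = b by [].
  by apply: finj => //; rewrite inE.
exists (Wseq g); split.
- elim=> [|k IH] /=; first exact: filterT.
  exact: filterI.
- exact: Wseq_mono.
- move=> U hU; have [b [Bb' by'] bU] := Bb y U hU.
  exists (f b).+1 => z /= [_ gz]; apply: bU; exact: gb.
Qed.

Lemma l_open_SLP (R : realType) (M : topologicalType) (X : metricType R)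
  (phi : M -> X) (hsc : @second_countable M) (y : M) :
  open_at phi y -> SLP_at phi y.
Proof.
move=> H xs hxs.
have [W [Wn Wm Wb]] := countable_base hsc y.
have hN k : exists N, forall i, (N <= i)%N -> (phi @` W k) (xs i).
  have [N _ hN] := hxs _ (H _ (Wn k)).
  by exists N => i hi; apply: hN.
have [N hN'] := choice hN.
pose idx j := (j + \sum_(m < j.+1) N m)%N.
have idx_inc j : (idx j < idx j.+1)%N.
  rewrite /idx [X in (_ < _ + X)%N]big_ord_recr /=; lia.
have idx_ge j : (N j <= idx j)%N.
  rewrite /idx big_ord_recr /=; lia.
have hy j : exists z, W j z /\ phi z = xs (idx j).
  have [z Wz ez] := hN' j (idx j) (idx_ge j).
  by exists z.
have [ys hys] := choice hy.
exists idx, ys; split => //.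
- move=> U hU; have [k Wk] := Wb U hU.
  exists k => // j /= hj; apply: Wk; apply: (Wm k j hj).
  by have [] := hys j.
- by move=> j; have [] := hys j.
Qed.

Theorem theoremA2 (R : realType) (M : topologicalType) (X : metricType R)
  (phi : M -> X)
  (hT2 : hausdorff_space M) (hsc : @second_countable M)
  (hlc : locally_compact_space M)
  (hcont : continuous phi) (hsurj : forall x : X, exists y : M, phi y = x)
  (y : M) :
  [/\ (open_at phi y <-> approx_open_at phi y),
      (open_at phi y <-> SLP_at phi y),
      (open_at phi y <-> ASLP_at phi y) &
      (open_at phi y <-> local_local_at phi y)].
Proof.
have ao : approx_open_at phi y -> open_at phi y := l_approx_open hT2 hlc hcont (y:=y).
have sa : SLP_at phi y -> ASLP_at phi y := @l_SLP_ASLP R M X phi y.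
have aa : ASLP_at phi y -> approx_open_at phi y := @l_ASLP_approx R M X phi y.
have os : open_at phi y -> SLP_at phi y := @l_open_SLP R M X phi hsc y.
have oa : open_at phi y -> approx_open_at phi y := @l_open_approx R M X phi y.
have ol : open_at phi y -> local_local_at phi y := @l_open_LL R M X phi y.
have la : local_local_at phi y -> approx_open_at phi y := @l_LL_approx R M X phi y.
split; split; tauto.
Qed.
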